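(* Let $k\in\mathbb{N}$. For any three polygonal curves $\sigma$, $\tau$, $\upsilon$ in $\mathbb{R}^d$ (of arbitrary, possibly different, complexities) it holds that $$d_{k\text{-}DTW}(\sigma,\tau)\le k\cdot\big(d_{k\text{-}DTW}(\sigma,\upsilon)+d_{k\text{-}DTW}(\upsilon,\tau)\big).$$ This bound is tight, i.e., there exist curves $\sigma,\tau,\upsilon$ for which equality holds. Further, there is no constant $c>0$ independent of $k$ and of the complexities of the curves such that $d_{k\text{-}DTW}(\sigma,\tau)\le c\cdot\big(d_{k\text{-}DTW}(\sigma,\upsilon)+d_{k\text{-}DTW}(\upsilon,\tau)\big)$ holds for all triples of curves.
   Context: A polygonal curve of complexity $m$ in $\mathbb{R}^d$ is identified with its sequence of vertices $(w_1,\dots,w_m)$, $w_i\in\mathbb{R}^d$. For curves $\sigma=(v_1,\dots,v_{m'})$ and $\tau=(w_1,\dots,w_{m''})$, a traversal $T$ is a sequence of index pairs $(i,j)$ that starts with $(1,1)$, ends with $(m',m'')$, and in which each pair $(i,j)$ is followed only by $(i+1,j)$, $(i,j+1)$ or $(i+1,j+1)$; $\mathcal{T}$ denotes the set of all traversals. For a traversal $T$ let $s^{(T)}_1\ge s^{(T)}_2\ge\dots\ge s^{(T)}_{|T|}$ be the Euclidean distances $\|v_i-w_j\|$ over the pairs $(i,j)\in T$ sorted non-increasingly, and set $s^{(T)}_l=0$ for $l>|T|$. The $k$-DTW distance is $d_{k\text{-}DTW}(\sigma,\tau)=\min_{T\in\mathcal{T}}\sum_{l=1}^k s^{(T)}_l$.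 *)

(* Defs.v *)
From HB Require Import structures.
From mathcomp Require Import all_boot all_order all_algebra.
From mathcomp Require Import boolp classical_sets reals.
Set Implicit Arguments. Unset Strict Implicit. Unset Printing Implicit Defensive.
Import Order.TTheory GRing.Theory Num.Theory.
Local Open Scope ring_scope.

Section KDTW.
Variables (R : realType) (d : nat).

Definition edist (v w : 'rV[R]_d) : R :=
  Num.sqrt (\sum_(i < d) (v 0 i - w 0 i) ^+ 2).

(* A polygonal curve: its non-empty sequence of vertices (complexity = size). *)
Record curve := Curve { verts : seq 'rV[R]_d; verts_ne : (0 < size verts)%N }.

(* Traversals, 0-indexed: pairs (i,j) from (0,0) to (m1-1, m2-1), each step
   being (i+1,j), (i,j+1) or (i+1,j+1). *)
Definition tstep (p q : nat * nat) : bool :=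
  [|| q == (p.1.+1, p.2), q == (p.1, p.2.+1) | q == (p.1.+1, p.2.+1)].

Definition is_traversal (m1 m2 : nat) (T : seq (nat * nat)) : bool :=
  match T with
  | [::] => false
  | p :: T' => [&& p == (0%N, 0%N), path tstep p T' & last p T' == (m1.-1, m2.-1)]
  end.

(* Sum of the k largest distances along T (padded with zeros). *)
Definition tcost (k : nat) (s t : curve) (T : seq (nat * nat)) : R :=
  let ds := [seq edist (nth 0 (verts s) p.1) (nth 0 (verts t) p.2) | p <- T] in
  let sds := sort (fun x y : R => y <= x) ds in
  \sum_(l < k) nth 0 sds l.

(* k-DTW distance: minimum (= infimum of the finite nonempty set) over traversals. *)
Definition kDTW (k : nat) (s t : curve) : R :=
  inf [set x : R | exists T, is_traversal (size (verts s)) (size (verts t)) T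
                          /\ x = tcost k s t T]%classic.
End KDTW.

(* Main.v *)
Require Import Defs.
From HB Require Import structures.
From mathcomp Require Import all_boot all_order all_algebra.
From mathcomp Require Import boolp classical_sets reals.
From mathcomp Require Import ring lra zify.
Set Implicit Arguments. Unset Strict Implicit. Unset Printing Implicit Defensive.
Import Order.TTheory GRing.Theory Num.Theory.
Local Open Scope ring_scope.

Section Aux.
Variables (R : realType) (d : nat).

Lemma cs (x y : 'I_d -> R) :
  \sum_i x i * y i <= Num.sqrt (\sum_i x i ^+ 2) * Num.sqrt (\sum_i y i ^+ 2).
Proof.
have hx : 0 <= \sum_i x i ^+ 2 by apply: sumr_ge0 => i _; exact: sqr_ge0.
have hy : 0 <= \sum_i y i ^+ 2 by apply: sumr_ge0 => i _; exact: sqr_ge0.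
set A := Num.sqrt _; set B := Num.sqrt _.
have hA : A ^+ 2 = \sum_i x i ^+ 2 by rewrite sqr_sqrtr.
have hB : B ^+ 2 = \sum_i y i ^+ 2 by rewrite sqr_sqrtr.
have A0 : 0 <= A by apply: sqrtr_ge0.
have B0 : 0 <= B by apply: sqrtr_ge0.
have key : 2 * (A * B) * (\sum_i x i * y i) <= 2 * (A * B) ^+ 2.
  have -> : 2 * (A * B) ^+ 2 = \sum_i (x i ^+ 2 * B ^+ 2 + y i ^+ 2 * A ^+ 2).
    rewrite big_split /= -!mulr_suml -hA -hB; ring.
  rewrite mulr_sumr; apply: ler_sum => i _.
  have := sqr_ge0 (x i * B - y i * A); nra.
have [AB0|] := ltrP 0 (A * B).
  nra.
rewrite le_eqVlt => /orP [/eqP|]; last by move=> h; exfalso; nra.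
move/eqP; rewrite mulf_eq0 => /orP [] /eqP H.
- have H2 : \sum_i x i ^+ 2 = 0 by rewrite -hA H expr0n.
  have H3 := psumr_eq0P (fun i _ => sqr_ge0 (x i)) H2.
  rewrite big1 ?H ?mul0r // => i _.
  by have /eqP := H3 i isT; rewrite sqrf_eq0 => /eqP ->; rewrite mul0r.
- have H2 : \sum_i y i ^+ 2 = 0 by rewrite -hB H expr0n.
  have H3 := psumr_eq0P (fun i _ => sqr_ge0 (y i)) H2.
  rewrite big1 ?H ?mulr0 // => i _.
  by have /eqP := H3 i isT; rewrite sqrf_eq0 => /eqP ->; rewrite mulr0.
Qed.

Lemma edist_ge0 (v w : 'rV[R]_d) : 0 <= edist v w.
Proof. exact: sqrtr_ge0. Qed.

Lemma edist_tri (v u w : 'rV[R]_d) : edist v w <= edist v u + edist u w.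
Proof.
rewrite /edist.
set x := fun i => v 0 i - u 0 i; set y := fun i => u 0 i - w 0 i.
have E : forall i, v 0 i - w 0 i = x i + y i by move=> i; rewrite /x /y; ring.
under eq_bigr do rewrite E.
have hx : 0 <= \sum_i x i ^+ 2 by apply: sumr_ge0 => i _; exact: sqr_ge0.
have hy : 0 <= \sum_i y i ^+ 2 by apply: sumr_ge0 => i _; exact: sqr_ge0.
have := cs x y.
have hA := sqr_sqrtr hx; have hB := sqr_sqrtr hy.
have A0 := sqrtr_ge0 (\sum_i x i ^+ 2); have B0 := sqrtr_ge0 (\sum_i y i ^+ 2).
set A := Num.sqrt (\sum_i x i ^+ 2); set B := Num.sqrt (\sum_i y i ^+ 2).
move=> hcs.
have -> : \sum_i (x i + y i) ^+ 2 = \sum_i x i ^+ 2 + 2 * \sum_i x i * y i + \sum_i y i ^+ 2.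
  rewrite mulr_sumr -!big_split /=; apply: eq_bigr => i _; ring.
rewrite -hA -hB.
have -> : A ^+ 2 + 2 * (\sum_i x i * y i) + B ^+ 2 = (A ^+ 2 + 2 * (\sum_i x i * y i) + B ^+ 2) by [].
apply: le_trans (_ : Num.sqrt ((A + B) ^+ 2) <= _).
  apply: ler_wsqrtr; nra.
by rewrite sqrtr_sqr ger0_norm // addr_ge0.
Qed.
End Aux.
Inductive reach (g : nat -> nat -> bool) : nat -> nat -> Prop :=
| r0 : g 0%N 0%N -> reach g 0 0
| rS i j i' j' : reach g i j -> tstep (i, j) (i', j') -> g i' j' -> reach g i' j'.

Lemma reach_g g i j : reach g i j -> g i j.
Proof. by case. Qed.

Lemma path_reach g p T : path tstep p T -> all (fun q => g q.1 q.2) T ->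
  reach g p.1 p.2 -> reach g (last p T).1 (last p T).2.
Proof.
elim: T p => [|q T IH] p //= /andP [st pT] /andP [gq aT] rp.
apply: IH => //; move: st gq; rewrite [q]surjective_pairing => st gq; exact: rS rp st gq.
Qed.

Lemma trav_reach g m1 m2 T : is_traversal m1 m2 T -> all (fun q => g q.1 q.2) T ->
  reach g m1.-1 m2.-1.
Proof.
case: T => [|p T] //= /and3P [/eqP -> pT /eqP lT] /andP [g0 aT].
have := path_reach pT aT (r0 g0); by rewrite lT.
Qed.

Lemma reach_trav g i j : reach g i j -> exists T, is_traversal i.+1 j.+1 T
   /\ all (fun q => g q.1 q.2) T.
Proof.
elim => [g0|i1 j1 i' j' _ [T [tT aT]] st gq].
  by exists [:: (0%N, 0%N)] => /=; rewrite g0 eqxx.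
case: T tT aT => [|p T] //= /and3P [/eqP -> pT /eqP lT] /andP [g0 aT].
exists ((0%N,0%N) :: rcons T (i', j')) => /=.
by rewrite rcons_path pT lT st last_rcons /= g0 all_rcons gq aT /= eqxx.
Qed.

Lemma tstep_inv i j i' j' : tstep (i, j) (i', j') ->
  [/\ (i' = i \/ i' = i.+1), (j' = j \/ j' = j.+1) & (i + j < i' + j')%N].
Proof.
rewrite /tstep /= !xpair_eqE => /or3P [] /andP [/eqP -> /eqP ->];
  split; auto; lia.
Qed.

Lemma tstep_of i j i' j' : (i' = i \/ i' = i.+1) -> (j' = j \/ j' = j.+1) ->
  (i + j < i' + j')%N -> tstep (i, j) (i', j').
Proof. move=> h1 h2 h3; rewrite /tstep /= !xpair_eqE. lia. Qed.

Section Compose.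
Variables (R : realType) (D1 D2 D : nat -> nat -> R) (a b : R).
Hypothesis tri : forall i l j, D i j <= D1 i l + D2 l j.
Let g1 i l := D1 i l <= a.
Let g2 l j := D2 l j <= b.
Let g i j := D i j <= a + b.

Lemma gtri i l j : g1 i l -> g2 l j -> g i j.
Proof. rewrite /g1 /g2 /g => h1 h2; apply: le_trans (tri i l j) _; exact: lerD. Qed.

Lemma compose : forall i l, reach g1 i l -> forall j, reach g2 l j -> reach g i j.
Proof.
move=> i0 l0; elim => [g10 | i' l' i l H1 IH1 st1 g1il] j H2.
- have: forall l2, reach g2 l2 j -> l2 = 0%N -> reach g 0 j.
    move=> l2; elim => [g20 _| l'' j'' l2' j2 H2' IH2 st2 g2l] .
      by apply: r0; apply: gtri g10 g20.
    move: (st2) => /tstep_inv [El Ej Ne] E0; subst.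
    have E : l'' = 0%N by lia.
    subst; apply: (rS (IH2 erefl)); first by apply: tstep_of; lia.
    exact: gtri g10 g2l.
  by move=> /(_ _ H2 erefl).
- have: forall l2, reach g2 l2 j -> l2 = l -> reach g i j.
    move=> l2; elim => [g20 E | l'' j'' l2' j2 H2' IH2 st2 g2l E]; subst.
      move: st1 => /tstep_inv [Ei El Ne].
      have E : l' = 0%N by lia.
      subst; apply: (rS (IH1 0%N (r0 g20))); first by apply: tstep_of; lia.
      exact: gtri g1il g20.
    move: (st2) => /tstep_inv [El Ej Ne].
    case: El => El.
      subst; apply: (rS (IH2 erefl)); first by apply: tstep_of; lia.
      exact: gtri g1il g2l.
    subst; move: (st1) => /tstep_inv [Ei El Ne1].
    case: El => El.
      subst; apply: (rS (IH1 _ (rS H2' st2 g2l))); first by apply: tstep_of; lia.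
      exact: gtri g1il g2l.
    have HH : l' = l'' by lia.
    subst; have R1 := IH1 _ H2'.
    have [Ee|Ne2] := boolP ((i == i') && (j2 == j'')).
      by case/andP: Ee => /eqP -> /eqP ->.
    apply: (rS R1); first by apply: tstep_of; lia.
    exact: gtri g1il g2l.
  by move=> /(_ _ H2 erefl).
Qed.
End Compose.
Section TC.
Variable R : realType.
Definition geR := (fun x y : R => y <= x).

Lemma geR_tr : transitive geR.
Proof. by move=> y x z h1 h2; rewrite /geR; apply: le_trans h2 h1. Qed.
Lemma geR_total : total geR.
Proof. by move=> x y; rewrite /geR le_total. Qed.

Lemma nth_sort_in (ds : seq R) l : (l < size ds)%N -> nth 0 (sort geR ds) l \in ds.
Proof. by move=> h; rewrite -(mem_sort geR) mem_nth // size_sort. Qed.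

Lemma nth_sort_ge0 (ds : seq R) l : all (fun x => 0 <= x) ds -> 0 <= nth 0 (sort geR ds) l.
Proof.
move=> /allP a; case: (ltnP l (size ds)) => h; first exact: a (nth_sort_in h).
by rewrite nth_default // size_sort.
Qed.

Lemma tc_ge0 (ds : seq R) k : all (fun x => 0 <= x) ds ->
  0 <= \sum_(l < k) nth 0 (sort geR ds) l.
Proof. by move=> a; apply: sumr_ge0 => l _; apply: nth_sort_ge0. Qed.

Lemma tc_ge (ds : seq R) k x : (0 < k)%N -> all (fun x => 0 <= x) ds -> x \in ds ->
  x <= \sum_(l < k) nth 0 (sort geR ds) l.
Proof.
case: k => // k _ a xin; rewrite big_ord_recl /=.
have r0 : 0 <= \sum_(i < k) nth 0 (sort geR ds) (bump 0 i).
  by apply: sumr_ge0 => l _; apply: nth_sort_ge0.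
suff : x <= nth 0 (sort geR ds) 0 by move=> h; apply: le_trans h _; rewrite lerDl.
have := sort_sorted geR_total ds; rewrite -(mem_sort geR) in xin.
case: (sort geR ds) xin => // y rest; rewrite inE => /orP [/eqP -> //|xr] /= pr.
have := order_path_min geR_tr pr => /allP /(_ _ xr); done.
Qed.

Lemma tc_le (ds : seq R) k M : 0 <= M -> all (fun x => x <= M) ds ->
  \sum_(l < k) nth 0 (sort geR ds) l <= k%:R * M.
Proof.
move=> M0 /allP a.
have -> : k%:R * M = \sum_(l < k) M by rewrite sumr_const card_ord mulr_natl.
apply: ler_sum => l _; case: (ltnP l (size ds)) => h; first exact: a (nth_sort_in h).
by rewrite nth_default // size_sort.
Qed.

Lemma tc_const (ds : seq R) k c : all (fun x => x == c) ds -> (k <= size ds)%N ->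
  \sum_(l < k) nth 0 (sort geR ds) l = k%:R * c.
Proof.
move=> /allP a hk.
have -> : k%:R * c = \sum_(l < k) c by rewrite sumr_const card_ord mulr_natl.
apply: eq_bigr => l _; apply/eqP; apply: a; apply: nth_sort_in.
exact: leq_trans (ltn_ord l) hk.
Qed.

Lemma tc_single k (x : R) : (0 < k)%N -> \sum_(l < k) nth 0 (sort geR [:: x]) l = x.
Proof.
case: k => // k _; rewrite big_ord_recl /= big1 ?addr0 // => i _.
by rewrite nth_default.
Qed.
End TC.

Section Main.
Variable R : realType.

Lemma path_bounds p T : path tstep p T -> forall q, q \in p :: T ->
  (q.1 <= (last p T).1)%N /\ (q.2 <= (last p T).2)%N.
Proof.
elim: T p => [|r T IH] p /=.
  by move=> _ q; rewrite inE => /eqP ->.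
move=> /andP [st pT] q; rewrite inE => /orP [/eqP ->|qin]; last exact: IH.
have [h1 h2] := IH r pT r (mem_head _ _).
move: h1 h2; set L := last r T => h1 h2.
move: st; rewrite [r]surjective_pairing [p]surjective_pairing => /tstep_inv [? ? ?].
simpl in *; split; lia.
Qed.

Lemma path_size p T : path tstep p T -> ((last p T).2 <= p.2 + size T)%N.
Proof.
elim: T p => [|r T IH] p /=; first by rewrite addn0.
move=> /andP [st pT]; have := IH r pT.
set L := last r T.
move: st; rewrite [r]surjective_pairing [p]surjective_pairing => /tstep_inv [? ? ?].
simpl in *; lia.
Qed.

Lemma trav_bounds m1 m2 T : is_traversal m1 m2 T -> forall q, q \in T ->
  (q.1 <= m1.-1)%N /\ (q.2 <= m2.-1)%N.
Proof.
case: T => [|p T] //= /and3P [_ pT /eqP lT] q qin.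
by have := path_bounds pT qin; rewrite lT.
Qed.

Lemma trav_size m1 m2 T : is_traversal m1 m2 T -> (m2.-1 < size T)%N.
Proof.
case: T => [|p T] //= /and3P [/eqP p0 pT /eqP lT].
by have := path_size pT; rewrite lT p0 /=.
Qed.

Lemma reach_all i j : reach (fun _ _ => true) i j.
Proof.
elim: i j => [|i IH] j.
  elim: j => [|j IHj]; first exact: r0.
  by apply: (rS IHj) => //; apply: tstep_of; lia.
by apply: (rS (IH j)) => //; apply: tstep_of; lia.
Qed.

Variable d : nat.
Implicit Types (s t u : curve R d).

Lemma trav_exists s t : exists T, is_traversal (size (verts s)) (size (verts t)) T.
Proof.
have [T [tT _]] := reach_trav (reach_all (size (verts s)).-1 (size (verts t)).-1).
by exists T; rewrite !prednK ?verts_ne in tT.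
Qed.

Definition D s t i j := edist (nth 0 (verts s) i) (nth 0 (verts t) j).

Lemma tcostE k s t T : tcost k s t T =
  \sum_(l < k) nth 0 (sort (@geR R) [seq D s t p.1 p.2 | p <- T]) l.
Proof. by []. Qed.

Lemma ds_ge0 s t (T : seq (nat * nat)) : all (fun x => 0 <= x) [seq D s t p.1 p.2 | p <- T].
Proof. by apply/allP => x /mapP [p _ ->]; apply: edist_ge0. Qed.

Lemma kDTW_le k s t T : is_traversal (size (verts s)) (size (verts t)) T ->
  kDTW k s t <= tcost k s t T.
Proof.
move=> tT; apply: ge_inf; last by exists T.
exists 0 => x [T' [_ ->]]; rewrite tcostE; exact: tc_ge0 (ds_ge0 _ _ _).
Qed.

Lemma kDTW_ge k s t x : (forall T, is_traversal (size (verts s)) (size (verts t)) T ->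
  x <= tcost k s t T) -> x <= kDTW k s t.
Proof.
move=> h; apply: lb_le_inf.
  by have [T tT] := trav_exists s t; exists (tcost k s t T), T.
by move=> y [T [tT ->]]; apply: h.
Qed.

Lemma kDTW_ge0 k s t : 0 <= kDTW k s t.
Proof. by apply: kDTW_ge => T _; rewrite tcostE; apply: tc_ge0 (ds_ge0 _ _ _). Qed.

Lemma key k s t u T1 T2 : (0 < k)%N ->
  is_traversal (size (verts s)) (size (verts u)) T1 ->
  is_traversal (size (verts u)) (size (verts t)) T2 ->
  kDTW k s t <= k%:R * (tcost k s u T1 + tcost k u t T2).
Proof.
move=> k0 tT1 tT2.
set a := tcost k s u T1; set b := tcost k u t T2.
have a1 : all (fun q => (fun i l => D s u i l <= a) q.1 q.2) T1.
  apply/allP => p pin /=; rewrite /a tcostE; apply: tc_ge k0 (ds_ge0 _ _ _) _.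
  by apply/mapP; exists p.
have b1 : all (fun q => (fun l j => D u t l j <= b) q.1 q.2) T2.
  apply/allP => p pin /=; rewrite /b tcostE; apply: tc_ge k0 (ds_ge0 _ _ _) _.
  by apply/mapP; exists p.
have r1 := @trav_reach (fun i l => D s u i l <= a) _ _ _ tT1 a1.
have r2 := @trav_reach (fun l j => D u t l j <= b) _ _ _ tT2 b1.
have tri : forall i l j, D s t i j <= D s u i l + D u t l j.
  by move=> i l j; apply: edist_tri.
have r := compose tri r1 r2.
have [T [tT aT]] := reach_trav r.
rewrite !prednK ?verts_ne // in tT.
apply: le_trans (kDTW_le k tT) _; rewrite tcostE; apply: tc_le.
  by apply: addr_ge0; rewrite /a /b !tcostE; apply: tc_ge0 (ds_ge0 _ _ _).
apply/allP => x /mapP [p pin ->]; have /allP := aT; by move=> /(_ p pin).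
Qed.

Lemma part1 k s t u : kDTW k s t <= k%:R * (kDTW k s u + kDTW k u t).
Proof.
case: k => [|k].
  have [T tT] := trav_exists s t.
  by rewrite mul0r; apply: le_trans (kDTW_le 0 tT) _; rewrite tcostE big_ord0.
set X := kDTW _ s t.
have kp : 0 < (k.+1)%:R :> R by rewrite ltr0n.
have h1 : forall T2, is_traversal (size (verts u)) (size (verts t)) T2 ->
    X / (k.+1)%:R - tcost k.+1 u t T2 <= kDTW k.+1 s u.
  move=> T2 tT2; apply: kDTW_ge => T1 tT1.
  have := key (ltn0Sn k) tT1 tT2; rewrite -/X => h.
  by rewrite lerBlDr ler_pdivrMr // mulrC.
have h2 : X / (k.+1)%:R - kDTW k.+1 s u <= kDTW k.+1 u t.
  apply: kDTW_ge => T2 tT2; have := h1 T2 tT2.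
  by rewrite lerBlDr [X in _ <= X]addrC -lerBlDr.
move: h2; rewrite lerBlDr [X in _ <= X]addrC.
by rewrite ler_pdivrMr // mulrC.
Qed.
End Main.

Section Ex.
Variables (R : realType) (d : nat).

Definition vone : 'rV[R]_d := const_mx 1.
Definition cS : curve R d := @Curve R d [:: 0] erefl.
Definition cU : curve R d := @Curve R d [:: vone] erefl.
Lemma size_nseq_gt0 k : (0 < k)%N -> (0 < size (nseq k vone))%N.
Proof. by rewrite size_nseq. Qed.
Definition cT k (k0 : (0 < k)%N) : curve R d := @Curve R d (nseq k vone) (size_nseq_gt0 k0).

Lemma edist_vv (v : 'rV[R]_d) : edist v v = 0.
Proof. by rewrite /edist big1 ?sqrtr0 // => i _; rewrite subrr expr0n. Qed.

Lemma c0_gt0 : (0 < d)%N -> 0 < edist 0 vone.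
Proof.
move=> d0; rewrite /edist sqrtr_gt0.
under eq_bigr do rewrite !mxE sub0r sqrrN expr1n.
by rewrite sumr_const card_ord ltr0n.
Qed.

Lemma nth_cS i : nth 0 (verts cS) i = 0.
Proof. by case: i => [|i] /=; rewrite ?nth_nil. Qed.

Lemma example k (k0 : (0 < k)%N) :
  kDTW k cS (cT k0) = k%:R * edist 0 vone /\
  kDTW k cS cU + kDTW k cU (cT k0) = edist 0 vone.
Proof.
set c0 := edist 0 vone.
have lo : k%:R * c0 <= kDTW k cS (cT k0).
  apply: kDTW_ge => T tT; rewrite tcostE (@tc_const _ _ _ c0) //; last first.
    by rewrite size_map; have := trav_size tT; rewrite /= size_nseq prednK.
  apply/allP => x /mapP [p pin ->]; have [_ h2] := trav_bounds tT pin.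
  rewrite /D nth_cS /= nth_nseq.
  move: h2; rewrite /= size_nseq => h2.
  by have -> : (p.2 < k)%N by rewrite -(prednK k0) ltnS.

have su : kDTW k cS cU <= c0.
  have tT : is_traversal (size (verts cS)) (size (verts cU)) [:: (0%N, 0%N)] by [].
  by apply: le_trans (kDTW_le k tT) _; rewrite tcostE /= tc_single.
have ut : kDTW k cU (cT k0) <= 0.
  have [T tT] := trav_exists cU (cT k0).
  apply: le_trans (kDTW_le k tT) _; rewrite tcostE.
  apply: le_trans (tc_le _ (lexx 0) _) _; last by rewrite mulr0.
  apply/allP => x /mapP [p pin ->]; have [h1 h2] := trav_bounds tT pin.
  move: h1 h2; rewrite /= size_nseq => h1 h2.
  rewrite /D /=; have -> : p.1 = 0%N by move: h1; rewrite leqn0 => /eqP.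
  rewrite nth_nseq.
  have -> : (p.2 < k)%N = true by rewrite -(prednK k0) ltnS.
  by rewrite edist_vv.
have up := part1 k cS (cT k0) cU.
have kp : 0 < k%:R :> R by rewrite ltr0n.
split; nra.
Qed.
End Ex.

Theorem lemma2p3 (R : realType) :
  (* the k-relaxed triangle inequality *)
  (forall (d k : nat) (s t u : curve R d),
      kDTW k s t <= k%:R * (kDTW k s u + kDTW k u t)) /\
  (* tightness (non-degenerate equality) *)
  (forall (d k : nat), (0 < d)%N -> (0 < k)%N ->
      exists s t u : curve R d,
        0 < kDTW k s t /\ kDTW k s t = k%:R * (kDTW k s u + kDTW k u t)) /\
  (* no uniform constant *)
  (forall d : nat, (0 < d)%N ->
      ~ (exists c : R, 0 < c /\
           forall (k : nat) (s t u : curve R d),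
             kDTW k s t <= c * (kDTW k s u + kDTW k u t))).
Proof.
split; first by move=> d k s t u; exact: part1.
split.
  move=> d k d0 k0; have [e1 e2] := @example R d k k0.
  exists (cS R d), (cT R d k0), (cU R d); rewrite e1 e2; split => //.
  by apply: mulr_gt0; [rewrite ltr0n | exact: c0_gt0].
move=> d d0 [c [c0 h]].
have [n hn] : exists n : nat, c < n%:R by eexists; apply: archi_boundP; apply: ltW.
have k0 : (0 < n.+1)%N by [].
have [e1 e2] := @example R d n.+1 k0.
have := h n.+1 (cS R d) (cT R d k0) (cU R d); rewrite e1 e2.
have cp := @c0_gt0 R d d0.
have hn' : c < n.+1%:R by apply: lt_trans hn _; rewrite ltr_nat.
move=> H; nra.
Qed.
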